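(* Let $\alpha(n)$ be a sequence of positive reals and fix a positive integer $d$. Suppose there are real sequences $R(n)$, $\delta(n)>0$ and $C_r(n)$ ($0\le r\le d$) such that $\delta(n)\to0$, $C_r(n)\to c_r$, and, as $n\to\infty$, $$\frac{\alpha(n+j)}{\alpha(n)R(n)^j}=\sum_{r=0}^dC_r(n)\delta(n)^rj^r+o(\delta(n)^d)$$ for $j=1,\dots,d$. Let $R^*(n)$ and $\delta^*(n)>0$ be real sequences with $$R^*(n)=R(n)(1+o(\delta(n))),\qquad \delta^*(n)=\delta(n)(1+o(1))\qquad(n\to\infty).$$ Then there exist real sequences $C^*_r(n)$ with $C^*_r(n)\to c_r$ for each $r$, such that $$\frac{\alpha(n+j)}{\alpha(n)R^*(n)^j}=\sum_{r=0}^dC^*_r(n)\delta^*(n)^rj^r+o(\delta^*(n)^d)$$ as $n\to\infty$, for $j=1,\dots,d$. *)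

(* Defs.v *)
From Stdlib Require Export Reals.
Open Scope R_scope.

Definition little_o (u v : nat -> R) : Prop :=
  forall eps : R, 0 < eps ->
    exists N : nat, forall n : nat, (N <= n)%nat -> Rabs (u n) <= eps * Rabs (v n).

Definition expansion (C : nat -> nat -> R) (delta : nat -> R) (d n j : nat) : R :=
  sum_f_R0 (fun r => C r n * delta n ^ r * INR j ^ r) d.

(* Main.v *)
Require Import Defs.
From Stdlib Require Import Reals Lra Lia.
Open Scope R_scope.


Definition EB (u : nat -> R) := exists M N, forall n, (N <= n)%nat -> Rabs (u n) <= M.

Lemma cv_EB u l : Un_cv u l -> EB u.
Proof.
  intros H. destruct (H 1 Rlt_0_1) as [N HN]. exists (Rabs l + 1), N.
  intros n Hn. specialize (HN n Hn). unfold R_dist in HN.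
  pose proof (Rabs_triang_inv (u n) l). lra.
Qed.

Lemma cv_const l : Un_cv (fun _ => l) l.
Proof. intros eps He. exists 0%nat. intros. unfold R_dist. rewrite Rminus_diag, Rabs_R0. lra. Qed.

Lemma cv_ext u v l : (forall n, u n = v n) -> Un_cv u l -> Un_cv v l.
Proof. intros E H eps He. destruct (H eps He) as [N HN]. exists N. intros n Hn. rewrite <- E. auto. Qed.

Lemma cv_lim_ext u l l' : l = l' -> Un_cv u l -> Un_cv u l'.
Proof. intros ->; auto. Qed.

Lemma lo_ext_ev u v w : (exists N, forall n, (N <= n)%nat -> u n = v n) -> little_o u w -> little_o v w.
Proof.
  intros [N0 E] H eps He. destruct (H eps He) as [N HN]. exists (max N N0).
  intros n Hn. rewrite <- E by lia. apply HN. lia.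
Qed.

Lemma lo_ext u v w : (forall n, u n = v n) -> little_o u w -> little_o v w.
Proof. intros E. apply lo_ext_ev. exists 0%nat. auto. Qed.

Lemma lo_plus u v w : little_o u w -> little_o v w -> little_o (fun n => u n + v n) w.
Proof.
  intros Hu Hv eps He. destruct (Hu (eps/2)) as [N1 H1]; [lra|].
  destruct (Hv (eps/2)) as [N2 H2]; [lra|]. exists (max N1 N2). intros n Hn.
  specialize (H1 n ltac:(lia)). specialize (H2 n ltac:(lia)).
  pose proof (Rabs_triang (u n) (v n)). lra.
Qed.

Lemma lo_scale u v w t : little_o u v -> EB t -> (forall n, v n = t n * w n) -> little_o u w.
Proof.
  intros H [M [N0 HM]] E eps He.
  assert (HM' : 0 < Rabs M + 1) by (pose proof (Rabs_pos M); lra).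
  destruct (H (eps / (Rabs M + 1))) as [N HN].
  { apply Rdiv_lt_0_compat; lra. }
  exists (max N N0). intros n Hn. specialize (HN n ltac:(lia)). specialize (HM n ltac:(lia)).
  rewrite E, Rabs_mult in HN.
  assert (Rabs (t n) <= Rabs M + 1) by (pose proof (Rle_abs M); lra).
  eapply Rle_trans; [exact HN|].
  replace (eps * Rabs (w n)) with (eps / (Rabs M + 1) * ((Rabs M + 1) * Rabs (w n))) by (field; lra).
  apply Rmult_le_compat_l. { apply Rlt_le, Rdiv_lt_0_compat; lra. }
  apply Rmult_le_compat_r; [apply Rabs_pos | lra].
Qed.

Lemma lo_mult u w b : little_o u w -> EB b -> little_o (fun n => u n * b n) w.
Proof.
  intros H [M [N0 HM]] eps He.
  assert (HM' : 0 < Rabs M + 1) by (pose proof (Rabs_pos M); lra).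
  destruct (H (eps / (Rabs M + 1))) as [N HN].
  { apply Rdiv_lt_0_compat; lra. }
  exists (max N N0). intros n Hn. specialize (HN n ltac:(lia)). specialize (HM n ltac:(lia)).
  rewrite Rabs_mult.
  assert (Rabs (b n) <= Rabs M + 1) by (pose proof (Rle_abs M); lra).
  replace (eps * Rabs (w n)) with (eps / (Rabs M + 1) * Rabs (w n) * (Rabs M + 1)) by (field; lra).
  apply Rmult_le_compat; auto using Rabs_pos.
Qed.

Lemma lo_cv0 t w : Un_cv t 0 -> little_o (fun n => t n * w n) w.
Proof.
  intros H eps He. destruct (H eps He) as [N HN]. exists N. intros n Hn.
  specialize (HN n Hn). unfold R_dist in HN. rewrite Rminus_0_r in HN.
  rewrite Rabs_mult. apply Rmult_le_compat_r; [apply Rabs_pos|lra].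
Qed.

Lemma lo_to_cv0 u v : little_o u v -> Un_cv v 0 -> Un_cv u 0.
Proof.
  intros H Hv eps He. destruct (H 1 Rlt_0_1) as [N1 H1]. destruct (Hv eps He) as [N2 H2].
  exists (max N1 N2). intros n Hn. specialize (H1 n ltac:(lia)). specialize (H2 n ltac:(lia)).
  unfold R_dist in *. rewrite Rminus_0_r in *. lra.
Qed.

Lemma lo_div_cv0 g D : little_o g D -> (forall n, 0 < D n) -> Un_cv (fun n => g n / D n) 0.
Proof.
  intros H HD eps He. destruct (H (eps/2)) as [N HN]; [lra|]. exists N. intros n Hn.
  specialize (HN n Hn). specialize (HD n). unfold R_dist. rewrite Rminus_0_r.
  unfold Rdiv. rewrite Rabs_mult, Rabs_inv, (Rabs_pos_eq (D n)) by lra.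
  rewrite (Rabs_pos_eq (D n)) in HN by lra.
  apply (Rmult_le_compat_r (/ D n)) in HN; [|apply Rlt_le, Rinv_0_lt_compat; lra].
  replace (eps / 2 * D n * / D n) with (eps/2) in HN by (field; lra). lra.
Qed.

Lemma lo_sum (f : nat -> nat -> R) w m :
  (forall i, (i <= m)%nat -> little_o (f i) w) -> little_o (fun n => sum_f_R0 (fun i => f i n) m) w.
Proof.
  induction m; intros H.
  - simpl. apply H. lia.
  - simpl. apply lo_plus; [apply IHm; intros; apply H; lia | apply H; lia].
Qed.

Lemma cv_inv1 t : Un_cv t 0 -> Un_cv (fun n => / (1 + t n)) 1.
Proof.
  intros H eps He. destruct (H (Rmin (1/2) (eps/2))) as [N HN].
  { apply Rmin_pos; lra. }
  exists N. intros n Hn. specialize (HN n Hn). unfold R_dist in *. rewrite Rminus_0_r in HN.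
  pose proof (Rmin_l (1/2) (eps/2)). pose proof (Rmin_r (1/2) (eps/2)).
  pose proof (Rle_abs (t n)). pose proof (Rle_abs (- t n)). rewrite Rabs_Ropp in *.
  assert (Hp : 1/2 < 1 + t n) by lra.
  replace (/ (1 + t n) - 1) with (- t n * / (1 + t n)) by (field; lra).
  rewrite Rabs_mult, Rabs_Ropp, (Rabs_pos_eq (/ (1 + t n))) by (apply Rlt_le, Rinv_0_lt_compat; lra).
  assert (/ (1 + t n) < 2).
  { replace 2 with (/ (1/2)) by field. apply Rinv_lt_contravar; lra. }
  assert (0 < / (1 + t n)) by (apply Rinv_0_lt_compat; lra).
  pose proof (Rabs_pos (t n)).
  apply Rle_lt_trans with (Rabs (t n) * 2); [apply Rmult_le_compat_l; lra| lra].
Qed.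

Lemma cv_pow u l k : Un_cv u l -> Un_cv (fun n => u n ^ k) (l ^ k).
Proof.
  intros H. induction k; simpl.
  - apply cv_const.
  - apply CV_mult; auto.
Qed.

Definition Good (D : nat -> R) (d : nat) (F : nat -> nat -> R) (m : nat)
  (K : nat -> nat -> R) (l : nat -> R) : Prop :=
  (forall r, (m < r)%nat -> forall n, K r n = 0) /\
  (forall r, Un_cv (K r) (l r)) /\
  (forall j, (1 <= j <= d)%nat ->
     little_o (fun n => F n j - expansion K D m n j) (fun n => D n ^ d)).

Lemma Good_ext D d F G m K l l' : Good D d F m K l ->
  (forall n j, F n j = G n j) -> (forall r, l r = l' r) -> Good D d G m K l'.
Proof.
  intros [H1 [H2 H3]] E El. split; [|split]; auto.
  - intros r. rewrite <- El. auto.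
  - intros j Hj. eapply lo_ext; [|apply H3; exact Hj]. intros n; simpl. rewrite E. reflexivity.
Qed.

Lemma exp_pad K D m m' n j : (m <= m')%nat -> (forall r, (m < r)%nat -> K r n = 0) ->
  expansion K D m' n j = expansion K D m n j.
Proof.
  intros Hm Hz. induction Hm; auto.
  unfold expansion in *. simpl. rewrite IHHm, Hz by lia. ring.
Qed.

Lemma Good_pad D d F m m' K l : (m <= m')%nat -> Good D d F m K l -> Good D d F m' K l.
Proof.
  intros Hm [H1 [H2 H3]]. split; [|split]; auto.
  - intros r Hr. apply H1. lia.
  - intros j Hj. eapply lo_ext; [|apply H3; exact Hj]. intros n; simpl.
    rewrite (exp_pad K D m m') by (auto; intros; apply H1; auto). reflexivity.
Qed.

Lemma Good_plus D d F G m K L k l : Good D d F m K k -> Good D d G m L l ->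
  Good D d (fun n j => F n j + G n j) m (fun r n => K r n + L r n) (fun r => k r + l r).
Proof.
  intros [H1 [H2 H3]] [G1 [G2 G3]]. split; [|split].
  - intros r Hr n. rewrite H1, G1 by auto. ring.
  - intros r. apply CV_plus; auto.
  - intros j Hj. eapply lo_ext; [|apply lo_plus; [apply H3|apply G3]; exact Hj].
    intros n. simpl. unfold expansion.
    rewrite (sum_eq (fun r => (K r n + L r n) * D n ^ r * INR j ^ r) (fun r => K r n * D n ^ r * INR j ^ r + L r n * D n ^ r * INR j ^ r)).
    2:{ intros; ring. }
    rewrite plus_sum. ring.
Qed.

Definition shiftK (a b : nat -> R) (K : nat -> nat -> R) (r n : nat) : R :=
  a n * K r n + match r with O => 0 | S r' => b n * K r' n end.

Lemma exp_shift a b K D m n j :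
  expansion (shiftK a b K) D (S m) n j =
  a n * expansion K D (S m) n j + b n * D n * INR j * expansion K D m n j.
Proof.
  unfold expansion, shiftK. induction m.
  - simpl. ring.
  - change (sum_f_R0 ?f (S (S m))) with (sum_f_R0 f (S m) + f (S (S m))).
    rewrite IHm. simpl. ring.
Qed.

Lemma Good_lin D d F m K l a b a0 b0 :
  Un_cv D 0 -> Good D d F m K l -> Un_cv a a0 -> Un_cv b b0 ->
  Good D d (fun n j => F n j * (a n + b n * D n * INR j)) (S m) (shiftK a b K)
    (fun r => a0 * l r + match r with O => 0 | S r' => b0 * l r' end).
Proof.
  intros HD [H1 [H2 H3]] Ha Hb. split; [|split].
  - intros r Hr n. unfold shiftK. destruct r; [lia|]. rewrite !H1 by lia. ring.
  - intros r. unfold shiftK. apply CV_plus. apply CV_mult; auto.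
    destruct r. apply cv_const. apply CV_mult; auto.
  - intros j Hj. eapply lo_ext; [|apply lo_mult with (b := fun n => a n + b n * D n * INR j); [apply H3; exact Hj|]].
    + intros n. simpl. rewrite exp_shift.
      unfold expansion at 2. simpl. fold (expansion K D m n j). rewrite H1 by lia. ring.
    + eapply cv_EB. apply CV_plus; [apply Ha|]. apply CV_mult; [apply CV_mult; [apply Hb|apply HD]|apply cv_const].
Qed.

Lemma cv_pow0 D p : Un_cv D 0 -> Un_cv (fun n => D n ^ S p) 0.
Proof. intros H. apply cv_lim_ext with (0 ^ S p). simpl; ring. apply cv_pow; auto. Qed.

Lemma Good_trunc D d F m K l : Un_cv D 0 -> (d <= m)%nat -> Good D d F m K l ->
  forall j, (1 <= j <= d)%nat ->
  little_o (fun n => F n j - expansion K D d n j) (fun n => D n ^ d).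
Proof.
  intros HD Hdm [H1 [H2 H3]] j Hj.
  destruct (Nat.eq_dec d m) as [->|Hne]; [apply H3; exact Hj|].
  eapply lo_ext; [|apply lo_plus; [apply (H3 j Hj)|]].
  2:{ apply lo_sum with (m := (m - S d)%nat)
        (f := fun i n => K (S d + i)%nat n * D n ^ (S d + i) * INR j ^ (S d + i)).
      intros i Hi. eapply lo_ext; [|apply lo_cv0 with (t := fun n => K (S d + i)%nat n * D n ^ S i * INR j ^ (S d + i))].
      - intros n. cbv beta. replace (S d + i)%nat with (d + S i)%nat by lia. rewrite (pow_add (D n)). ring.
      - apply cv_lim_ext with (l (S d + i)%nat * 0 * INR j ^ (S d + i)). ring.
        apply CV_mult; [apply CV_mult|apply cv_const]; auto. apply cv_pow0; auto. }
  intros n. cbv beta. unfold expansion. rewrite (tech2 _ d m) by lia. cbv beta. ring.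
Qed.

Fixpoint Q (k j : nat) : R :=
  match k with O => 1 | S k' => Q k' j * (INR j - INR k') / INR (S k') end.

Lemma C_n0 j : C j 0 = 1.
Proof. unfold C. rewrite Nat.sub_0_r. simpl. field. apply INR_fact_neq_0. Qed.

Lemma Q_C k j : (k <= j)%nat -> Q k j = C j k.
Proof.
  induction k; intros H.
  - simpl. rewrite C_n0. reflexivity.
  - rewrite pascal_step3 by lia. change (Q (S k) j) with (Q k j * (INR j - INR k) / INR (S k)). rewrite IHk by lia. rewrite minus_INR by lia.
    field. apply not_0_INR. lia.
Qed.

Lemma Q_zero k j : (j < k)%nat -> Q k j = 0.
Proof.
  induction k; intros H; [lia|].
  change (Q (S k) j) with (Q k j * (INR j - INR k) / INR (S k)). destruct (Nat.eq_dec j k) as [->|Hne].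
  - unfold Rdiv. rewrite Rminus_diag. ring.
  - rewrite IHk by lia. unfold Rdiv. ring.
Qed.

Lemma Q_binom x j m : (j <= m)%nat -> sum_f_R0 (fun i => Q i j * x ^ i) m = (1 + x) ^ j.
Proof.
  intros Hjm.
  assert (Hj : sum_f_R0 (fun i => Q i j * x ^ i) j = (1 + x) ^ j).
  { rewrite Rplus_comm, binomial. apply sum_eq. intros i Hi. rewrite Q_C by lia. rewrite pow1. ring. }
  destruct (Nat.eq_dec j m) as [<-|Hne]; auto.
  rewrite (tech2 _ j m) by lia. rewrite Hj.
  rewrite (sum_eq _ (fun _ => 0)). rewrite sum_cte. ring.
  intros i Hi. rewrite Q_zero by lia. ring.
Qed.

Lemma step_k D d A g m K l k :
  (forall n, 0 < D n) -> Un_cv D 0 -> Un_cv g 0 -> Un_cv (fun n => g n / D n) 0 ->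
  Good D d (fun n j => A n j * Q k j * g n ^ k) m K l ->
  exists K', Good D d (fun n j => A n j * Q (S k) j * g n ^ S k) (S m) K' (fun _ => 0).
Proof.
  intros HDp HD Hg HgD HG.
  pose (a := fun n => - (g n * INR k / INR (S k))).
  pose (b := fun n => g n / D n * / INR (S k)).
  assert (Ha : Un_cv a 0).
  { apply cv_ext with (fun n => g n * (- INR k / INR (S k))).
    { intros n. unfold a. field. apply not_0_INR. lia. }
    apply cv_lim_ext with (0 * (- INR k / INR (S k))). ring.
    apply CV_mult; auto. apply cv_const. }
  assert (Hb : Un_cv b 0).
  { apply cv_lim_ext with (0 * / INR (S k)). ring.
    apply CV_mult; auto. apply cv_const. }
  exists (shiftK a b K).
  eapply Good_ext; [apply (Good_lin D d _ m K l a b 0 0 HD HG Ha Hb)| |].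
  - intros n j. change (Q (S k) j) with (Q k j * (INR j - INR k) / INR (S k)).
    unfold a, b. simpl pow. field. split; [apply not_0_INR; lia|]. specialize (HDp n). lra.
  - intros r. destruct r; ring.
Qed.

Theorem proposition4p4
  (alpha Rn delta Rs deltas : nat -> R) (d : nat)
  (C : nat -> nat -> R) (c : nat -> R) :
  (forall n, 0 < alpha n) ->
  (0 < d)%nat ->
  (forall n, 0 < delta n) ->
  Un_cv delta 0 ->
  (forall r, (r <= d)%nat -> Un_cv (C r) (c r)) ->
  (forall j, (1 <= j <= d)%nat ->
     little_o
       (fun n => alpha (n + j)%nat / (alpha n * Rn n ^ j) - expansion C delta d n j)
       (fun n => delta n ^ d)) ->
  (forall n, 0 < deltas n) ->
  (exists e : nat -> R, little_o e delta /\ forall n, Rs n = Rn n * (1 + e n)) ->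
  (exists f : nat -> R, Un_cv f 0 /\ forall n, deltas n = delta n * (1 + f n)) ->
  exists Cs : nat -> nat -> R,
    (forall r, (r <= d)%nat -> Un_cv (Cs r) (c r)) /\
    (forall j, (1 <= j <= d)%nat ->
       little_o
         (fun n => alpha (n + j)%nat / (alpha n * Rs n ^ j) - expansion Cs deltas d n j)
         (fun n => deltas n ^ d)).
Proof.
  intros Hal Hd Hdel Hdcv HC Hexp Hds [e [He HRs]] [f [Hf Hdeltas]].
  set (D := deltas) in *.
  assert (Hf1 : forall n, 0 < 1 + f n).
  { intros n. specialize (Hds n). specialize (Hdel n). rewrite Hdeltas in Hds.
    destruct (Rlt_le_dec 0 (1 + f n)); auto. nra. }
  pose (u := fun n => / (1 + f n)).
  assert (Hdu : forall n, delta n = u n * D n).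
  { intros n. unfold u, D. rewrite Hdeltas. field. specialize (Hf1 n). lra. }
  assert (Hu : Un_cv u 1) by (apply cv_inv1; auto).
  assert (HD0 : Un_cv D 0).
  { apply cv_ext with (fun n => delta n * (1 + f n)). intros; unfold D; rewrite Hdeltas; auto.
    apply cv_lim_ext with (0 * (1 + 0)). ring. apply CV_mult; auto. apply CV_plus; auto. apply cv_const. }
  assert (HeD : little_o e D).
  { apply lo_scale with (v := delta) (t := u); auto. eapply cv_EB; eauto. }
  assert (He0 : Un_cv e 0) by (eapply lo_to_cv0; eauto).
  pose (g := fun n => / (1 + e n) - 1).
  assert (HgD : little_o g D).
  { apply lo_ext_ev with (fun n => e n * (- / (1 + e n))).
    - destruct (He0 (1/2)) as [N HN]; [lra|]. exists N. intros n Hn. specialize (HN n Hn).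
      unfold R_dist in HN. rewrite Rminus_0_r in HN. pose proof (Rle_abs (- e n)). rewrite Rabs_Ropp in *.
      unfold g. field. lra.
    - apply lo_mult; auto. eapply cv_EB. apply cv_ext with (opp_seq (fun n => / (1 + e n))).
      intros; unfold opp_seq; auto. apply CV_opp. apply cv_inv1; auto. }
  assert (Hg0 : Un_cv g 0) by (eapply lo_to_cv0; eauto).
  assert (HgDc : Un_cv (fun n => g n / D n) 0) by (apply lo_div_cv0; auto).
  pose (A := fun n j => alpha (n + j)%nat / (alpha n * Rn n ^ j)).
  pose (C' := fun r n => if (r <=? d)%nat then C r n * u n ^ r else 0).
  pose (c' := fun r => if (r <=? d)%nat then c r else 0).
  assert (GA : Good D d A d C' c').
  { split; [|split].
    - intros r Hr n. unfold C'. destruct (Nat.leb_spec r d); [lia|auto].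
    - intros r. unfold C', c'. destruct (Nat.leb_spec r d).
      + apply cv_lim_ext with (c r * 1 ^ r). rewrite pow1; ring.
        apply CV_mult; auto. apply cv_pow; auto.
      + apply cv_const.
    - intros j Hj. apply lo_scale with (v := fun n => delta n ^ d) (t := fun n => u n ^ d).
      + eapply lo_ext; [|apply Hexp; exact Hj]. intros n. cbv beta. f_equal.
        unfold expansion. apply sum_eq. intros i Hi. unfold C'.
        destruct (Nat.leb_spec i d); [|lia]. rewrite Hdu, Rpow_mult_distr. ring.
      + eapply cv_EB. apply cv_pow; eauto.
      + intros n. cbv beta. rewrite Hdu, Rpow_mult_distr. reflexivity. }
  assert (HDp : forall n, 0 < D n) by exact Hds.
  assert (Hterm : forall k, exists m K, (m <= d + S k)%nat /\
     Good D d (fun n j => A n j * Q (S k) j * g n ^ S k) m K (fun _ => 0)).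
  { induction k.
    - destruct (step_k D d A g d C' c' 0 HDp HD0 Hg0 HgDc) as [K HK].
      + eapply Good_ext; [exact GA| |reflexivity]. intros n j. simpl. ring.
      + exists (S d), K. split; [lia|exact HK].
    - destruct IHk as [m [K [Hm HK]]].
      destruct (step_k D d A g m K _ (S k) HDp HD0 Hg0 HgDc HK) as [K' HK'].
      exists (S m), K'. split; [lia|exact HK']. }
  assert (Hsum : forall k, (k <= d)%nat -> exists K,
     Good D d (fun n j => sum_f_R0 (fun i => A n j * Q i j * g n ^ i) k) (2 * d) K c').
  { induction k; intros Hk.
    - exists C'. apply Good_pad with d; [lia|].
      eapply Good_ext; [exact GA| |reflexivity]. intros n j. simpl. ring.
    - destruct IHk as [K HK]; [lia|].
      destruct (Hterm k) as [m [L [Hm HL]]].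
      apply (Good_pad D d _ m (2 * d)) in HL; [|lia].
      eexists. eapply Good_ext; [apply (Good_plus _ _ _ _ _ _ _ _ _ HK HL)| |].
      + intros n j. reflexivity.
      + intros r. cbv beta. ring. }
  destruct (Hsum d (le_n d)) as [K HK].
  exists K. split.
  - intros r Hr. destruct HK as [_ [HK _]]. specialize (HK r). unfold c' in HK.
    destruct (Nat.leb_spec r d); [auto|lia].
  - intros j Hj. eapply lo_ext; [|apply (Good_trunc D d (fun n j => sum_f_R0 (fun i => A n j * Q i j * g n ^ i) d) (2 * d) K c' HD0); [lia|exact HK|exact Hj]].
    intros n. cbv beta. f_equal.
    rewrite (sum_eq _ (fun i => (Q i j * g n ^ i) * A n j)) by (intros; ring).
    rewrite <- scal_sum, Q_binom by lia.
    unfold A, g. rewrite HRs, Rpow_mult_distr.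
    replace (1 + (/ (1 + e n) - 1)) with (/ (1 + e n)) by ring.
    rewrite pow_inv. unfold Rdiv. rewrite !Rinv_mult. ring.
Qed.
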